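(* Fix $\alpha\in(0,1)$. For every $\rho\in[0,\infty)^{\mathcal E}$ with $f=\mu(\rho)\in\mathcal F$, and every $\pi\in\Pi$, $$\nabla_\rho W(\rho,\pi)'H(f,\pi)=\sum_{v=0}^{n-1}\alpha^v\sum_{e\in\mathcal E_v^+}\sigma_e H_e(f,\pi)\le-(1-\alpha)V(f,\pi),$$ where the gradient is computed with the convention $\frac{d}{dx}|x|=\mathrm{sgn}(x)$ for all $x$ (including $x=0$).
   Context: $\mathcal G=(\mathcal V,\mathcal E)$ is a finite directed graph with $\mathcal V=\{0,1,\dots,n\}$, containing no directed cycle, in which node $0$ is the unique node with no incoming link, node $n$ is the unique node with no outgoing link, there is a directed path from every node to $n$, and every link $(u,v)\in\mathcal E$ satisfies $u<v$. For $v\in\mathcal V$, $\mathcal E_v^-$ and $\mathcal E_v^+$ are the sets of links entering and leaving $v$. Each link $e$ has a flow-density function $\mu_e:[0,\infty)\to[0,\infty)$ that is continuously differentiable, strictly increasing, strictly concave, with $\mu_e(0)=0$ and $\mu_e'(0)<\infty$; $C_e:=\lim_{\rho\to\infty}\mu_e(\rho)\in(0,+\infty]$; $\mathcal F_v:=\prod_{e\in\mathcal E_v^+}[0,C_e)$, $\mathcal F:=\prod_{e\in\mathcal E}[0,C_e)$, $\mu(\rho):=(\mu_e(\rho_e))_e$. $\mathcal P$ is the set of directed paths from $0$ to $n$, $A$ the link-path incidence matrix ($A_{ep}=1$ iff $e\in p$), $\mathcal S(\cdot)$ denotes a probability simplex, $\Pi:=\{\pi\in\mathcal S(\mathcal P):(A\pi)_e<C_e\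 \forall e\}$, $f^\pi:=A\pi$, $\rho^\pi_e:=\mu_e^{-1}(f^\pi_e)$. For each $v\in\{0,\dots,n-1\}$ a continuously differentiable $G^v:\mathcal F_v\times\Pi\to\mathcal S(\mathcal E_v^+)$ is given such that (consistency) $(\sum_{j\in\mathcal E_v^+}f^\pi_j)\,G^v_e(f^\pi_{\mathcal E_v^+},\pi)=f^\pi_e$ for all $\pi\in\Pi$, $e\in\mathcal E_v^+$; and (cooperativity) $\partial G^v_j(f_{\mathcal E_v^+},\pi)/\partial f_e\ge0$ for all $\pi\in\Pi$, $f_{\mathcal E_v^+}\in\mathcal F_v$, $j\neq e\in\mathcal E_v^+$. For $f\in\mathcal F$, $\pi\in\Pi$, $e\in\mathcal E_v^+$: $H_e(f,\pi):=G^v_e(f_{\mathcal E_v^+},\pi)-f_e$ if $v=0$, and $H_e(f,\pi):=(\sum_{j\in\mathcal E_v^-}f_j)G^v_e(f_{\mathcal E_v^+},\pi)-f_e$ if $1\le v<n$. Notation: $\sigma_e:=\mathrm{sgn}(f_e-f^\pi_e)=\mathrm{sgn}(\rho_e-\rho^\pi_e)$ ($\mathrm{sgn}(0)=0$); $V(f,\pi):=\sum_{v=0}^{n-1}\alpha^v\sum_{e\in\mathcal E_v^+}|f_e-f^\pi_e|$; $W(\rho,\pi):=\sum_{v=0}^{n-1}\alpha^v\sum_{e\in\mathcal E_v^+}|\rho_e-\rho^\pi_e|$. *)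

(* Defs.v *)
From Stdlib Require Import Reals Lra Lia List Arith.
Import ListNotations.
Open Scope R_scope.

Definition sumL {A : Type} (l : list A) (F : A -> R) : R :=
  fold_right (fun x acc => F x + acc) 0 l.

Definition sumN (N : nat) (F : nat -> R) : R := sumL (seq 0 N) F.

Definition sgn (x : R) : R :=
  if Rlt_dec 0 x then 1 else if Rlt_dec x 0 then -1 else 0.

(* The graph.  Nodes are 0..n; links are indexed by 0..m-1; link e goes
   from node (tl e) to node (hd e).                                    *)

Fixpoint path_from (n m : nat) (tl hd : nat -> nat) (u : nat) (p : list nat)
  : Prop :=
  match p with
  | [] => u = n
  | e :: p' => (e < m)%nat /\ tl e = u /\ path_from n m tl hd (hd e) p'
  end.

Definition is_path n m tl hd (p : list nat) : Prop := path_from n m tl hd 0 p.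

Definition network (n m : nat) (tl hd : nat -> nat) : Prop :=
  (* links are pairs (u,v) with u < v (no multi-links; acyclic) *)
  (forall e, (e < m)%nat -> (tl e < hd e)%nat /\ (hd e <= n)%nat) /\
  (forall e e', (e < m)%nat -> (e' < m)%nat ->
      tl e = tl e' -> hd e = hd e' -> e = e') /\
  (* 0 is the unique node with no incoming link *)
  (forall v, (1 <= v <= n)%nat -> exists e, (e < m)%nat /\ hd e = v) /\
  (* n is the unique node with no outgoing link *)
  (forall v, (v < n)%nat -> exists e, (e < m)%nat /\ tl e = v) /\
  (forall v, (v <= n)%nat -> exists p, path_from n m tl hd v p).

Fixpoint lists_len (k m : nat) : list (list nat) :=
  match k with
  | O => [[]]
  | S k' => flat_map (fun e => map (cons e) (lists_len k' m)) (seq 0 m)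
  end.

(* A finite list of candidate paths (lists of length <= n over links);
   it contains every path from 0 to n, since each link strictly increases
   the node index.  Used only to express finite sums over P.           *)
Definition cand_paths (n m : nat) : list (list nat) :=
  flat_map (fun k => lists_len k m) (seq 0 (S n)).

Definition memb (e : nat) (p : list nat) : bool := existsb (Nat.eqb e) p.

Definition fpi (n m : nat) (pi : list nat -> R) (e : nat) : R :=
  sumL (cand_paths n m) (fun p => if memb e p then pi p else 0).

(* derivative of h at x within the set D (one-sided at boundary points) *)
Definition deriv_within (h : R -> R) (D : R -> Prop) (x l : R) : Prop :=
  limit1_in (fun y => (h y - h x) / (y - x)) (fun y => D y /\ y <> x) l x.

Definition nonneg (x : R) : Prop := 0 <= x.

Definition flow_density (mu : R -> R) : Prop :=
  (exists dmu : R -> R,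
      (forall x, 0 <= x -> deriv_within mu nonneg x (dmu x)) /\
      (forall x, 0 <= x -> limit1_in dmu nonneg (dmu x) x)) /\
  (forall x y, 0 <= x -> x < y -> mu x < mu y) /\
  (forall x y t, 0 <= x -> 0 <= y -> x <> y -> 0 < t < 1 ->
      t * mu x + (1 - t) * mu y < mu (t * x + (1 - t) * y)) /\
  mu 0 = 0.

(* x < C_e where C_e = lim_{rho -> infty} mu_e(rho) = sup mu_e (possibly +infty) *)
Definition belowC (mu : R -> R) (x : R) : Prop :=
  exists r, 0 <= r /\ x < mu r.

Definition in_Pi n m tl hd (mu : nat -> R -> R) (pi : list nat -> R) : Prop :=
  (forall p, ~ is_path n m tl hd p -> pi p = 0) /\
  (forall p, 0 <= pi p) /\
  sumL (cand_paths n m) pi = 1 /\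
  (forall e, (e < m)%nat -> belowC (mu e) (fpi n m pi e)).

Definition sum_out m (tl : nat -> nat) (v : nat) (F : nat -> R) : R :=
  sumN m (fun e => if Nat.eqb (tl e) v then F e else 0).
Definition sum_in m (hd : nat -> nat) (v : nat) (F : nat -> R) : R :=
  sumN m (fun e => if Nat.eqb (hd e) v then F e else 0).

Definition in_Fv m (tl : nat -> nat) (mu : nat -> R -> R) v (f : nat -> R) :=
  forall e, (e < m)%nat -> tl e = v -> 0 <= f e /\ belowC (mu e) (f e).

Definition upd (f : nat -> R) (e : nat) (x : R) : nat -> R :=
  fun k => if Nat.eqb k e then x else f k.

(* Route choice functions G^v : F_v x Pi -> S(E_v^+), with
   G v f pi e = G^v_e(f_{E_v^+}, pi). *)
Definition route_choice n m tl hd (mu : nat -> R -> R)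
  (G : nat -> (nat -> R) -> (list nat -> R) -> nat -> R) : Prop :=
  (forall v f g pi, (forall e, (e < m)%nat -> tl e = v -> f e = g e) ->
      forall j, G v f pi j = G v g pi j) /\
  (forall v f pi, (v < n)%nat -> in_Fv m tl mu v f -> in_Pi n m tl hd mu pi ->
      (forall e, (e < m)%nat -> tl e = v -> 0 <= G v f pi e) /\
      sum_out m tl v (G v f pi) = 1) /\
  (exists dG : nat -> (list nat -> R) -> nat -> nat -> (nat -> R) -> R,
     (* dG v pi j e f = d G^v_j (f, pi) / d f_e *)
     (forall v pi f j e, (v < n)%nat -> in_Pi n m tl hd mu pi ->
        in_Fv m tl mu v f ->
        (j < m)%nat -> tl j = v -> (e < m)%nat -> tl e = v ->
        deriv_within (fun x => G v (upd f e x) pi j)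
          (fun x => 0 <= x /\ belowC (mu e) x) (f e) (dG v pi j e f)) /\
     (forall v pi f j e, (v < n)%nat -> in_Pi n m tl hd mu pi ->
        in_Fv m tl mu v f ->
        (j < m)%nat -> tl j = v -> (e < m)%nat -> tl e = v ->
        forall eps, eps > 0 -> exists delta, delta > 0 /\
          forall g, in_Fv m tl mu v g ->
            (forall k, (k < m)%nat -> tl k = v -> Rabs (g k - f k) < delta) ->
            Rabs (dG v pi j e g - dG v pi j e f) < eps) /\
     (forall v pi f j e, (v < n)%nat -> in_Pi n m tl hd mu pi ->
        in_Fv m tl mu v f ->
        (j < m)%nat -> tl j = v -> (e < m)%nat -> tl e = v -> j <> e ->
        0 <= dG v pi j e f)) /\
  (forall v pi e, (v < n)%nat -> in_Pi n m tl hd mu pi ->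
      (e < m)%nat -> tl e = v ->
      sum_out m tl v (fpi n m pi) * G v (fpi n m pi) pi e = fpi n m pi e).

Definition Hf m (tl hd : nat -> nat)
  (G : nat -> (nat -> R) -> (list nat -> R) -> nat -> R)
  (f : nat -> R) (pi : list nat -> R) (e : nat) : R :=
  if Nat.eqb (tl e) 0 then G 0%nat f pi e - f e
  else sum_in m hd (tl e) f * G (tl e) f pi e - f e.

Definition Vf n m tl (alpha : R) (f : nat -> R) (pi : list nat -> R) : R :=
  sumN n (fun v => alpha ^ v *
    sum_out m tl v (fun e => Rabs (f e - fpi n m pi e))).

(* W(rho, pi), with rhopi_e = mu_e^{-1}(f^pi_e) *)
Definition Wr n m tl (alpha : R) (rho rhopi : nat -> R) : R :=
  sumN n (fun v => alpha ^ v *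
    sum_out m tl v (fun e => Rabs (rho e - rhopi e))).

Definition gradW (tl : nat -> nat) (alpha : R) (rho rhopi : nat -> R) (e : nat) : R :=
  alpha ^ (tl e) * sgn (rho e - rhopi e).

(* Main.v *)
Require Import Defs.
From Stdlib Require Import Reals List Lra Lia Arith Classical FunctionalExtensionality.
Import ListNotations.
Open Scope R_scope.

Lemma sumL_app {A} (l1 l2 : list A) F : sumL (l1 ++ l2) F = sumL l1 F + sumL l2 F.
Proof. induction l1; simpl; [lra|]. rewrite IHl1; lra. Qed.

Lemma sumL_ext {A} (l : list A) F F' : (forall x, In x l -> F x = F' x) -> sumL l F = sumL l F'.
Proof. induction l; simpl; intros H; auto. rewrite H, IHl; auto. Qed.

Lemma sumL_le {A} (l : list A) F F' : (forall x, In x l -> F x <= F' x) -> sumL l F <= sumL l F'.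
Proof. induction l; simpl; intros H; [lra|]. specialize (IHl (fun x h => H x (or_intror h))).
  specialize (H a (or_introl eq_refl)). lra. Qed.

Lemma sumL_plus {A} (l : list A) F F' : sumL l (fun x => F x + F' x) = sumL l F + sumL l F'.
Proof. induction l; simpl; [lra|]. rewrite IHl; lra. Qed.

Lemma sumL_scal {A} (l : list A) c F : sumL l (fun x => c * F x) = c * sumL l F.
Proof. induction l; simpl; [lra|]. rewrite IHl; lra. Qed.

Lemma sumL_zero {A} (l : list A) : sumL l (fun _ => 0) = 0.
Proof. induction l; simpl; [lra|]. rewrite IHl; lra. Qed.

Lemma sumL_swap {A B} (l1 : list A) (l2 : list B) F :
  sumL l1 (fun a => sumL l2 (fun b => F a b)) = sumL l2 (fun b => sumL l1 (fun a => F a b)).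
Proof. induction l1; simpl. - rewrite sumL_zero; auto.
  - rewrite IHl1. rewrite <- sumL_plus. auto. Qed.

Lemma sumL_nonneg {A} (l : list A) F : (forall x, In x l -> 0 <= F x) -> 0 <= sumL l F.
Proof. intros H. rewrite <- (sumL_zero l). apply sumL_le; auto. Qed.

Lemma sumN_ext N F F' : (forall e, (e < N)%nat -> F e = F' e) -> sumN N F = sumN N F'.
Proof. intros H; apply sumL_ext; intros x Hx; apply in_seq in Hx; apply H; lia. Qed.
Lemma sumN_le N F F' : (forall e, (e < N)%nat -> F e <= F' e) -> sumN N F <= sumN N F'.
Proof. intros H; apply sumL_le; intros x Hx; apply in_seq in Hx; apply H; lia. Qed.
Lemma sumN_plus N F F' : sumN N (fun x => F x + F' x) = sumN N F + sumN N F'.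
Proof. apply sumL_plus. Qed.
Lemma sumN_scal N c F : sumN N (fun x => c * F x) = c * sumN N F.
Proof. apply sumL_scal. Qed.
Lemma sumN_minus N F F' : sumN N (fun x => F x - F' x) = sumN N F - sumN N F'.
Proof. replace (fun x => F x - F' x) with (fun x => F x + (-1) * F' x).
  rewrite sumN_plus, sumN_scal; lra. apply functional_extensionality; intros; lra. Qed.
Lemma sumN_swap N M F : sumN N (fun a => sumN M (fun b => F a b)) = sumN M (fun b => sumN N (fun a => F a b)).
Proof. apply sumL_swap. Qed.
Lemma sumN_S N F : sumN (S N) F = sumN N F + F N.
Proof. unfold sumN. rewrite seq_S, sumL_app. simpl. lra. Qed.
Lemma sumN_nonneg N F : (forall e, (e < N)%nat -> 0 <= F e) -> 0 <= sumN N F.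
Proof. intros H; apply sumL_nonneg; intros x Hx; apply in_seq in Hx; apply H; lia. Qed.

Lemma sumN_delta N k c : sumN N (fun v => if Nat.eqb k v then c v else 0) =
  if Nat.ltb k N then c k else 0.
Proof. induction N.
  - unfold sumN; simpl. destruct (Nat.ltb k 0) eqn:E; [apply Nat.ltb_lt in E; lia|auto].
  - rewrite sumN_S, IHN. destruct (Nat.eqb k N) eqn:E1.
    + apply Nat.eqb_eq in E1; subst. replace (Nat.ltb N N) with false by (symmetry; apply Nat.ltb_ge; lia).
      replace (Nat.ltb N (S N)) with true by (symmetry; apply Nat.ltb_lt; lia). lra.
    + apply Nat.eqb_neq in E1. destruct (Nat.ltb k N) eqn:E2.
      * apply Nat.ltb_lt in E2. replace (Nat.ltb k (S N)) with true by (symmetry; apply Nat.ltb_lt; lia). lra.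
      * apply Nat.ltb_ge in E2. replace (Nat.ltb k (S N)) with false by (symmetry; apply Nat.ltb_ge; lia). lra.
Qed.

Lemma regroup n m (key : nat -> nat) (a : R) (F : nat -> R) :
  sumN n (fun v => a ^ v * sumN m (fun e => if Nat.eqb (key e) v then F e else 0)) =
  sumN m (fun e => if Nat.ltb (key e) n then a ^ (key e) * F e else 0).
Proof.
  transitivity (sumN n (fun v => sumN m (fun e => if Nat.eqb (key e) v then a ^ v * F e else 0))).
  { apply sumN_ext; intros v _. rewrite <- sumN_scal. apply sumN_ext; intros e _.
    destruct (Nat.eqb (key e) v); lra. }
  rewrite sumN_swap. apply sumN_ext; intros e _. apply (sumN_delta n (key e) (fun v => a ^ v * F e)).
Qed.

Lemma deriv_cont phi D t l : deriv_within phi D t l ->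
  forall eps, eps > 0 -> exists del, del > 0 /\ forall y, D y -> Rabs (y - t) < del ->
   Rabs (phi y - phi t) < eps.
Proof.
  intros Hd eps Heps. destruct (Hd 1 Rlt_0_1) as [d0 [Hd0 H0]].
  exists (Rmin d0 (eps / (Rabs l + 1))). split.
  { apply Rmin_pos; auto. apply Rdiv_lt_0_compat; auto. pose proof (Rabs_pos l); lra. }
  intros y Dy Hy. destruct (Req_dec y t) as [->|Hne].
  { replace (phi t - phi t) with 0 by ring. rewrite Rabs_R0; lra. }
  assert (Hq := H0 y (conj (conj Dy Hne) (Rlt_le_trans _ _ _ Hy (Rmin_l _ _)))).
  simpl in Hq. unfold R_dist in Hq.
  set (q := (phi y - phi t) / (y - t)) in *.
  assert (E : phi y - phi t = q * (y - t)) by (unfold q; field; lra).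
  rewrite E, Rabs_mult.
  assert (Hq' : Rabs q <= Rabs l + 1).
  { replace q with ((q - l) + l) by ring. eapply Rle_trans; [apply Rabs_triang|]. lra. }
  assert (Hy' : Rabs (y - t) < eps / (Rabs l + 1)) by (eapply Rlt_le_trans; [exact Hy| apply Rmin_r]).
  assert (Hl : 0 < Rabs l + 1) by (pose proof (Rabs_pos l); lra).
  assert (Hyt : 0 < Rabs (y - t)) by (apply Rabs_pos_lt; lra).
  apply Rle_lt_trans with ((Rabs l + 1) * Rabs (y - t)).
  { apply Rmult_le_compat_r; auto. apply Rabs_pos. }
  apply Rmult_lt_reg_l with (/ (Rabs l + 1)). apply Rinv_0_lt_compat; auto.
  rewrite <- Rmult_assoc, Rinv_l by lra. unfold Rdiv in Hy'. lra.
Qed.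

Lemma deriv_interior phi psi D a b c l : deriv_within phi D c l ->
  (forall y, a <= y <= b -> D y) -> (forall y, a <= y <= b -> psi y = phi y) -> a < c < b ->
  derivable_pt_lim psi c l.
Proof.
  intros Hd HD Hpsi Hc eps Heps. destruct (Hd eps Heps) as [d0 [Hd0 H0]].
  assert (Hp : 0 < Rmin d0 (Rmin (c - a) (b - c))).
  { apply Rmin_pos; auto. apply Rmin_pos; lra. }
  exists (mkposreal _ Hp). simpl. intros h Hh Hlt.
  assert (h1 := Rmin_l d0 (Rmin (c - a) (b - c))).
  assert (h2 := Rmin_r d0 (Rmin (c - a) (b - c))).
  assert (h3 := Rmin_l (c - a) (b - c)). assert (h4 := Rmin_r (c - a) (b - c)).
  assert (Hb : a <= c + h <= b).
  { destruct (Rabs_def2 h _ Hlt). set (m1 := Rmin (c - a) (b - c)) in *. set (m2 := Rmin d0 m1) in *. lra. }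
  rewrite Hpsi by auto. rewrite (Hpsi c) by lra.
  assert (Hne : c + h <> c) by lra.
  assert (Hdd : dist R_met (c + h) c < d0).
  { simpl; unfold R_dist. replace (c + h - c) with h by ring. lra. }
  assert (Hq := H0 (c + h) (conj (conj (HD _ Hb) Hne) Hdd)).
  simpl in Hq; unfold R_dist in Hq. replace (c + h - c) with h in Hq by ring. exact Hq.
Qed.

Lemma clamp_lip a b c x : a <= c <= b -> a <= b ->
  Rabs (Rmax a (Rmin x b) - c) <= Rabs (x - c) /\ a <= Rmax a (Rmin x b) <= b.
Proof.
  intros Hc Hab. unfold Rmax, Rmin. repeat destruct Rle_dec; split_Rabs; lra.
Qed.

Lemma mono phi d D a b : a <= b -> (forall y, a <= y <= b -> D y) ->
  (forall y, a <= y <= b -> deriv_within phi D y (d y) /\ 0 <= d y) -> phi a <= phi b.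
Proof.
  intros Hab HD Hder. destruct (Req_dec a b) as [->|Hne]; [lra|].
  assert (Hlt : a < b) by lra.
  set (psi := fun t => phi (Rmax a (Rmin t b))).
  assert (Hpsi : forall y, a <= y <= b -> psi y = phi y).
  { intros y Hy; unfold psi; f_equal. unfold Rmax, Rmin; repeat destruct Rle_dec; lra. }
  assert (pr1 : forall c, a < c < b -> derivable_pt psi c).
  { intros c Hc. exists (d c). apply (deriv_interior phi psi D a b c (d c)); auto. apply Hder; lra. }
  assert (pr2 : forall c, a < c < b -> derivable_pt (fun x => x) c).
  { intros c _; apply derivable_pt_id. }
  assert (Hcont : forall c, a <= c <= b -> continuity_pt psi c).
  { intros c Hc eps Heps. destruct (Hder c Hc) as [Hdc _].
    destruct (deriv_cont _ _ _ _ Hdc eps Heps) as [del [Hdel Hx]].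
    exists del; split; auto. intros x [_ Hxd]. simpl in *; unfold R_dist in *.
    destruct (clamp_lip a b c x Hc Hab) as [L1 L2].
    rewrite (Hpsi c Hc). unfold psi. apply Hx. apply HD; auto. lra. }
  destruct (MVT psi (fun x => x) a b pr1 pr2 Hlt Hcont
     (fun c _ => derivable_continuous_pt _ _ (derivable_pt_id c))) as [c [P HP]].
  rewrite (derive_pt_eq_0 _ _ _ (pr2 c P) (derivable_pt_lim_id c)) in HP.
  assert (Hdl : derivable_pt_lim psi c (d c)).
  { apply (deriv_interior phi psi D a b c (d c)); auto. apply Hder; lra. }
  rewrite (derive_pt_eq_0 _ _ _ (pr1 c P) Hdl) in HP.
  rewrite <- (Hpsi a), <- (Hpsi b) by lra.
  assert (0 <= d c) by (apply Hder; lra). nra.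
Qed.

Definition sel m (key : nat -> nat) v (F : nat -> R) := sumN m (fun e => if Nat.eqb (key e) v then F e else 0).

Lemma sel_plus m key v F F' : sel m key v (fun e => F e + F' e) = sel m key v F + sel m key v F'.
Proof. unfold sel. rewrite <- sumN_plus. apply sumN_ext; intros. destruct Nat.eqb; lra. Qed.

Lemma sel_delta m key v e : (e < m)%nat ->
  sel m key v (fun e' => if Nat.eqb e' e then 1 else 0) = if Nat.eqb (key e) v then 1 else 0.
Proof. intros He. unfold sel.
  transitivity (sumN m (fun e' => if Nat.eqb e e' then (if Nat.eqb (key e') v then 1 else 0) else 0)).
  { apply sumN_ext; intros e' _. rewrite (Nat.eqb_sym e e').
    destruct (Nat.eqb e' e) eqn:E; destruct (Nat.eqb (key e') v); auto. }
  rewrite (sumN_delta m e (fun e' => if Nat.eqb (key e') v then 1 else 0)).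
  replace (Nat.ltb e m) with true by (symmetry; apply Nat.ltb_lt; auto). auto. Qed.

Lemma memb_In e p : memb e p = true <-> In e p.
Proof. unfold memb. rewrite existsb_exists. split.
  - intros [x [Hx E]]. apply Nat.eqb_eq in E; subst; auto.
  - intros H; exists e; split; auto. apply Nat.eqb_refl. Qed.

Lemma path_tl n m tl hd : network n m tl hd -> forall p u, path_from n m tl hd u p ->
  forall e, In e p -> (u <= tl e)%nat /\ (e < m)%nat.
Proof. intros [Hn _] p. induction p as [|e0 p IH]; simpl; intros u Hp e Hin; [contradiction|].
  destruct Hp as [Hm [Ht Hp]]. destruct Hin as [<-|Hin]; [lia|].
  destruct (IH _ Hp e Hin). destruct (Hn e0 Hm). lia. Qed.

Definition indp (p : list nat) (e : nat) : R := if memb e p then 1 else 0.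

Lemma cnt n m tl hd : network n m tl hd -> forall p u, path_from n m tl hd u p -> forall v,
  sel m hd v (indp p) + (if Nat.eqb v u then 1 else 0) = sel m tl v (indp p) + (if Nat.eqb v n then 1 else 0).
Proof. intros Hnet p. induction p as [|e p IH]; simpl; intros u Hp v.
  - unfold sel, indp. simpl. subst.
    assert (Z : forall k, sumN m (fun e => if Nat.eqb (k e) v then 0 else 0) = 0).
    { intros k. rewrite (sumN_ext m _ (fun _ => 0)) by (intros; destruct Nat.eqb; auto). apply sumL_zero. }
    rewrite !Z. lra.
  - destruct Hp as [Hm [Ht Hp]].
    assert (Hnot : memb e p = false).
    { destruct (memb e p) eqn:E; auto. apply memb_In in E. destruct (path_tl _ _ _ _ Hnet _ _ Hp e E).
      destruct Hnet as [Hn _]. destruct (Hn e Hm). lia. }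
    assert (Hi : forall k, sel m k v (indp (e :: p)) = sel m k v (fun e' => if Nat.eqb e' e then 1 else 0) + sel m k v (indp p)).
    { intros k. rewrite <- sel_plus. unfold sel. apply sumN_ext; intros e' _.
      unfold indp; simpl. destruct (Nat.eqb e' e) eqn:E; simpl.
      - apply Nat.eqb_eq in E; subst. rewrite Hnot. destruct Nat.eqb; lra.
      - destruct (k e' =? v); [|lra]. destruct memb; lra. }
    rewrite !Hi, !sel_delta by auto. specialize (IH _ Hp v). subst u.
    rewrite (Nat.eqb_sym (hd e) v), (Nat.eqb_sym (tl e) v). lra.
Qed.

Lemma sgn_pos x : 0 < x -> sgn x = 1.
Proof. unfold sgn; destruct Rlt_dec; [auto|lra]. Qed.
Lemma sgn_neg x : x < 0 -> sgn x = -1.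
Proof. unfold sgn; destruct Rlt_dec; [lra|]. destruct Rlt_dec; [auto|lra]. Qed.
Lemma sgn_0 : sgn 0 = 0.
Proof. unfold sgn; repeat destruct Rlt_dec; lra. Qed.
Lemma sgn_bound x : -1 <= sgn x <= 1.
Proof. unfold sgn; repeat destruct Rlt_dec; lra. Qed.
Lemma sgn_abs x : sgn x * x = Rabs x.
Proof. unfold sgn; repeat destruct Rlt_dec.
  - rewrite Rabs_right; lra. - rewrite Rabs_left; lra.
  - replace x with 0 by lra. rewrite Rabs_R0; lra. Qed.

Lemma upd_upd b k t x : upd (upd b k t) k x = upd b k x.
Proof. apply functional_extensionality; intros e; unfold upd; destruct Nat.eqb; auto. Qed.
Lemma upd_same b k : upd b k (b k) = b.
Proof. apply functional_extensionality; intros e; unfold upd; destruct Nat.eqb eqn:E; auto.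
  apply Nat.eqb_eq in E; subst; auto. Qed.
Lemma upd_at b k x : upd b k x k = x.
Proof. unfold upd; rewrite Nat.eqb_refl; auto. Qed.

Lemma in_Fv_upd m tl mu v b k x : in_Fv m tl mu v b -> 0 <= x -> belowC (mu k) x ->
  in_Fv m tl mu v (upd b k x).
Proof. intros Hb Hx Hbx e He Ht. unfold upd. destruct (Nat.eqb e k) eqn:E.
  - apply Nat.eqb_eq in E; subst; auto. - apply Hb; auto. Qed.


Lemma mono_G (n m : nat) (tl hd : nat -> nat) (mu : nat -> R -> R) (G : nat -> (nat -> R) -> (list nat -> R) -> nat -> R) (HG : route_choice n m tl hd mu G) v pi b k j t1 t2 : (v < n)%nat -> in_Pi n m tl hd mu pi -> in_Fv m tl mu v b ->
  (k < m)%nat -> tl k = v -> (j < m)%nat -> tl j = v -> j <> k -> t1 <= t2 -> 0 <= t1 ->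
  belowC (mu k) t2 -> G v (upd b k t1) pi j <= G v (upd b k t2) pi j.
Proof.
  intros Hv Hpi Hb Hk Htk Hj Htj Hjk H12 H1 H2.
  destruct HG as [_ [_ [[dG [Hd [_ Hco]]] _]]].
  apply (mono (fun t => G v (upd b k t) pi j) (fun t => dG v pi j k (upd b k t))
           (fun x => 0 <= x /\ belowC (mu k) x) t1 t2 H12).
  - intros y Hy. split; [lra|]. destruct H2 as [r [Hr Hr2]]. exists r; split; auto; lra.
  - intros y Hy. assert (Dy : 0 <= y /\ belowC (mu k) y).
    { split; [lra|]. destruct H2 as [r [Hr Hr2]]. exists r; split; auto; lra. }
    assert (HF : in_Fv m tl mu v (upd b k y)) by (apply in_Fv_upd; tauto).
    split.
    + pose proof (Hd v pi (upd b k y) j k Hv Hpi HF Hj Htj Hk Htk) as X.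
      rewrite upd_at in X.
      replace (fun x => G v (upd (upd b k y) k x) pi j) with (fun x => G v (upd b k x) pi j) in X
        by (apply functional_extensionality; intros; rewrite upd_upd; auto).
      exact X.
    + apply Hco; auto.
Qed.

Lemma step_lemma (n m : nat) (tl hd : nat -> nat) (mu : nat -> R -> R) (G : nat -> (nat -> R) -> (list nat -> R) -> nat -> R) (HG : route_choice n m tl hd mu G) v pi b k x (sig : nat -> R) : (v < n)%nat -> in_Pi n m tl hd mu pi ->
  in_Fv m tl mu v b -> (k < m)%nat -> tl k = v -> 0 <= x -> belowC (mu k) x ->
  sig k = sgn (x - b k) -> (forall j, -1 <= sig j <= 1) ->
  sel m tl v (fun j => sig j * (G v (upd b k x) pi j - G v b pi j)) <= 0.
Proof.
  intros Hv Hpi Hb Hk Htk Hx Hbx Hs Hsb.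
  assert (HF : in_Fv m tl mu v (upd b k x)) by (apply in_Fv_upd; auto).
  pose proof HG as [_ [Hsimp _]].
  destruct (Hsimp v _ pi Hv HF Hpi) as [_ S1]. destruct (Hsimp v _ pi Hv Hb Hpi) as [_ S2].
  set (s := sig k).
  apply Rle_trans with (sel m tl v (fun j => s * (G v (upd b k x) pi j - G v b pi j))).
  - unfold sel. apply sumN_le; intros j Hj. destruct (Nat.eqb (tl j) v) eqn:E; [|lra].
    apply Nat.eqb_eq in E. destruct (Nat.eq_dec j k) as [->|Hjk]; [unfold s; lra|].
    assert (Hbk := proj1 (Hb k Hk Htk)). assert (Hbkb := proj2 (Hb k Hk Htk)).
    pose proof (Hsb j).
    destruct (Rtotal_order (b k) x) as [Hl|[He|Hg]].
    + assert (s = 1) by (unfold s; rewrite Hs; apply sgn_pos; lra).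
      pose proof (mono_G n m tl hd mu G HG v pi b k j (b k) x Hv Hpi Hb Hk Htk Hj E Hjk ltac:(lra) Hbk Hbx).
      rewrite upd_same in H1. nra.
    + subst x. rewrite upd_same. lra.
    + assert (s = -1) by (unfold s; rewrite Hs; apply sgn_neg; lra).
      pose proof (mono_G n m tl hd mu G HG v pi b k j x (b k) Hv Hpi Hb Hk Htk Hj E Hjk ltac:(lra) Hx Hbkb).
      rewrite upd_same in H1. nra.
  - unfold sel. rewrite (sumN_ext m _ (fun j => s * ((if Nat.eqb (tl j) v then G v (upd b k x) pi j else 0) - (if Nat.eqb (tl j) v then G v b pi j else 0)))).
    + rewrite sumN_scal, sumN_minus. unfold sum_out in S1, S2. rewrite S1, S2. lra.
    + intros; destruct Nat.eqb; lra.
Qed.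

Lemma coop (n m : nat) (tl hd : nat -> nat) (mu : nat -> R -> R) (G : nat -> (nat -> R) -> (list nat -> R) -> nat -> R) (HG : route_choice n m tl hd mu G) v pi f g : (v < n)%nat -> in_Pi n m tl hd mu pi ->
  in_Fv m tl mu v f -> in_Fv m tl mu v g ->
  sel m tl v (fun j => sgn (f j - g j) * (G v f pi j - G v g pi j)) <= 0.
Proof.
  intros Hv Hpi Hf Hg.
  pose proof HG as [Hdep _].
  set (h := fun k e => if Nat.ltb e k then f e else g e).
  assert (Hh : forall k, in_Fv m tl mu v (h k)).
  { intros k e He Ht; unfold h; destruct Nat.ltb; auto. }
  assert (Hind : forall k, (k <= m)%nat ->
     sel m tl v (fun j => sgn (f j - g j) * (G v (h k) pi j - G v g pi j)) <= 0).
  { induction k; intros Hk.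
    - assert (h 0%nat = g) by (apply functional_extensionality; intros e; unfold h; destruct e; auto).
      rewrite H. unfold sel. rewrite (sumN_ext m _ (fun _ => 0)).
      + unfold sumN; rewrite sumL_zero; lra.
      + intros; destruct Nat.eqb; lra.
    - specialize (IHk ltac:(lia)).
      assert (E : sel m tl v (fun j => sgn (f j - g j) * (G v (h (S k)) pi j - G v g pi j)) =
        sel m tl v (fun j => sgn (f j - g j) * (G v (h (S k)) pi j - G v (h k) pi j)) +
        sel m tl v (fun j => sgn (f j - g j) * (G v (h k) pi j - G v g pi j))).
      { rewrite <- sel_plus. unfold sel; apply sumN_ext; intros; destruct Nat.eqb; lra. }
      rewrite E. enough (sel m tl v (fun j => sgn (f j - g j) * (G v (h (S k)) pi j - G v (h k) pi j)) <= 0) by lra.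
      destruct (Nat.eq_dec (tl k) v) as [Htk|Htk].
      + assert (Eh : h (S k) = upd (h k) k (f k)).
        { apply functional_extensionality; intros e; unfold h, upd.
          destruct (Nat.eqb e k) eqn:E1.
          - apply Nat.eqb_eq in E1; subst. replace (Nat.ltb k (S k)) with true by (symmetry; apply Nat.ltb_lt; lia). auto.
          - apply Nat.eqb_neq in E1. destruct (Nat.ltb e (S k)) eqn:E2; destruct (Nat.ltb e k) eqn:E3; auto.
            + apply Nat.ltb_lt in E2; apply Nat.ltb_ge in E3; lia.
            + apply Nat.ltb_ge in E2; apply Nat.ltb_lt in E3; lia. }
        rewrite Eh. apply (step_lemma n m tl hd mu G HG); auto.
        * apply (Hf k); auto. * apply (Hf k); auto.
        * unfold h. replace (Nat.ltb k k) with false by (symmetry; apply Nat.ltb_ge; lia). auto.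
        * intros; apply sgn_bound.
      + unfold sel. rewrite (sumN_ext m _ (fun _ => 0)).
        * unfold sumN; rewrite sumL_zero; lra.
        * intros j Hj. rewrite (Hdep v (h (S k)) (h k) pi).
          { destruct Nat.eqb; lra. }
          intros e He Hte. unfold h. destruct (Nat.eq_dec e k) as [->|Hek]; [congruence|].
          destruct (Nat.ltb e (S k)) eqn:E2; destruct (Nat.ltb e k) eqn:E3; auto.
          -- apply Nat.ltb_lt in E2; apply Nat.ltb_ge in E3; lia.
          -- apply Nat.ltb_ge in E2; apply Nat.ltb_lt in E3; lia. }
  specialize (Hind m (le_n m)).
  unfold sel in *. erewrite sumN_ext; [exact Hind|]. intros j Hj.
  rewrite (Hdep v f (h m) pi); [auto|].
  intros e He _. unfold h. replace (Nat.ltb e m) with true by (symmetry; apply Nat.ltb_lt; lia). auto.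
Qed.

Lemma sumN_opp N F : - sumN N F = sumN N (fun e => - F e).
Proof. replace (- sumN N F) with (-1 * sumN N F) by ring. rewrite <- sumN_scal. apply sumN_ext; intros; ring. Qed.

Lemma sel_fpi n m (pi : list nat -> R) (key : nat -> nat) v : sel m key v (fpi n m pi) =
  sumL (cand_paths n m) (fun p => pi p * sel m key v (indp p)).
Proof.
  unfold sel, fpi.
  transitivity (sumN m (fun e => sumL (cand_paths n m) (fun p => pi p * (if Nat.eqb (key e) v then indp p e else 0)))).
  - apply sumN_ext; intros e _. destruct Nat.eqb.
    + apply sumL_ext; intros p _; unfold indp; destruct memb; lra.
    + rewrite (sumL_ext _ _ (fun _ => 0)) by (intros; lra). rewrite sumL_zero; auto.
  - unfold sumN. rewrite sumL_swap. apply sumL_ext; intros p _. rewrite <- sumL_scal. auto.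
Qed.

Lemma conserv n m tl hd mu (pi : list nat -> R) v : network n m tl hd -> in_Pi n m tl hd mu pi -> (v < n)%nat ->
  sel m tl v (fpi n m pi) = sel m hd v (fpi n m pi) + (if Nat.eqb v 0 then 1 else 0).
Proof.
  intros Hnet [Hz [_ [Hs _]]] Hv. rewrite !sel_fpi.
  rewrite (sumL_ext _ _ (fun p => pi p * sel m hd v (indp p) + (if Nat.eqb v 0 then 1 else 0) * pi p)).
  - rewrite sumL_plus, sumL_scal, Hs. lra.
  - intros p _. destruct (classic (is_path n m tl hd p)) as [Hp|Hp].
    + pose proof (cnt n m tl hd Hnet p 0%nat Hp v).
      replace (Nat.eqb v n) with false in H by (symmetry; apply Nat.eqb_neq; lia). nra.
    + rewrite Hz by auto. lra.
Qed.

Lemma sel_hd0 n m tl hd F : network n m tl hd -> sel m hd 0 F = 0.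
Proof. intros [Hn _]. unfold sel. rewrite (sumN_ext m _ (fun _ => 0)).
  - apply sumL_zero.
  - intros e He. destruct (Hn e He). destruct (Nat.eqb (hd e) 0) eqn:E; auto.
    apply Nat.eqb_eq in E; lia. Qed.

Theorem lemma3
  (n m : nat) (tl hd : nat -> nat) (mu : nat -> R -> R)
  (G : nat -> (nat -> R) -> (list nat -> R) -> nat -> R)
  (alpha : R)
  (Hnet : network n m tl hd)
  (Hmu : forall e, (e < m)%nat -> flow_density (mu e))
  (HG : route_choice n m tl hd mu G)
  (Halpha : 0 < alpha < 1)
  (rho : nat -> R) (Hrho : forall e, (e < m)%nat -> 0 <= rho e)
  (pi : list nat -> R) (Hpi : in_Pi n m tl hd mu pi)
  (* rhopi_e = mu_e^{-1}(f^pi_e) *)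
  (rhopi : nat -> R)
  (Hrhopi : forall e, (e < m)%nat ->
     0 <= rhopi e /\ mu e (rhopi e) = fpi n m pi e) :
  let f := fun e => mu e (rho e) in
  sumN m (fun e => gradW tl alpha rho rhopi e * Hf m tl hd G f pi e)
    = sumN n (fun v => alpha ^ v *
        sum_out m tl v (fun e => sgn (f e - fpi n m pi e) * Hf m tl hd G f pi e))
  /\
  sumN n (fun v => alpha ^ v *
        sum_out m tl v (fun e => sgn (f e - fpi n m pi e) * Hf m tl hd G f pi e))
    <= - (1 - alpha) * Vf n m tl alpha f pi.
Proof.
  intros f.
  assert (Hn1 : forall e, (e < m)%nat -> (tl e < hd e)%nat /\ (hd e <= n)%nat) by apply Hnet.
  assert (Htln : forall e, (e < m)%nat -> Nat.ltb (tl e) n = true).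
  { intros e He; apply Nat.ltb_lt; destruct (Hn1 e He); lia. }
  assert (HfF : forall v, in_Fv m tl mu v f).
  { intros v e He _. destruct (Hmu e He) as [_ [Hinc [_ H0]]]. split.
    - unfold f. pose proof (Hrho e He). destruct (Req_dec (rho e) 0) as [E|E].
      + rewrite E, H0; lra. + rewrite <- H0. left; apply Hinc; lra.
    - exists (rho e + 1). split; [pose proof (Hrho e He); lra|]. unfold f; apply Hinc; [apply Hrho; auto|lra]. }
  assert (HpF : forall v, in_Fv m tl mu v (fpi n m pi)).
  { intros v e He _. destruct Hpi as [_ [Hp0 [_ Hb]]]. split; [|apply Hb; auto].
    unfold fpi. apply sumL_nonneg; intros p _; destruct memb; auto; lra. }
  split.
  - change (sumN m (fun e => gradW tl alpha rho rhopi e * Hf m tl hd G f pi e) =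
      sumN n (fun v => alpha ^ v * sel m tl v (fun e => sgn (f e - fpi n m pi e) * Hf m tl hd G f pi e))).
    unfold sel; rewrite regroup. apply sumN_ext; intros e He. rewrite Htln by auto.
    unfold gradW. rewrite Rmult_assoc. f_equal. f_equal.
    destruct (Hrhopi e He) as [Hr0 Hr1]. rewrite <- Hr1. unfold f.
    destruct (Hmu e He) as [_ [Hinc _]]. pose proof (Hrho e He).
    destruct (Rtotal_order (rho e) (rhopi e)) as [L|[Q|L]].
    + rewrite !sgn_neg; auto; [|lra]. specialize (Hinc _ _ H L). lra.
    + rewrite Q. replace (mu e (rhopi e) - mu e (rhopi e)) with 0 by ring.
      replace (rhopi e - rhopi e) with 0 by ring. auto.
    + rewrite !sgn_pos; auto; [|lra]. specialize (Hinc _ _ Hr0 L). lra.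
  - set (x := fun e => Rabs (f e - fpi n m pi e)).
    assert (Node : forall v, (v < n)%nat ->
      sel m tl v (fun e => sgn (f e - fpi n m pi e) * Hf m tl hd G f pi e) <= sel m hd v x - sel m tl v x).
    { intros v Hv.
      set (Gf := G v f pi). set (Gp := G v (fpi n m pi) pi).
      set (lam := if Nat.eqb v 0 then 1 else sel m hd v f).
      set (lp := sel m tl v (fpi n m pi)).
      pose proof HG as [_ [Hsimp [_ Hcons]]].
      destruct (Hsimp v f pi Hv (HfF v) Hpi) as [Gf0 Gf1].
      assert (HH : forall e, (e < m)%nat -> tl e = v -> Hf m tl hd G f pi e = lam * Gf e - f e).
      { intros e He Ht. unfold Hf, lam, Gf. rewrite Ht. destruct (Nat.eqb v 0) eqn:E.
        - apply Nat.eqb_eq in E; subst. ring.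
        - auto. }
      assert (HC : forall e, (e < m)%nat -> tl e = v -> fpi n m pi e = lp * Gp e).
      { intros e He Ht. symmetry; apply (Hcons v pi e Hv Hpi He Ht). }
      set (A := sel m tl v (fun e => sgn (f e - fpi n m pi e) * Gf e)).
      set (B := sel m tl v (fun e => sgn (f e - fpi n m pi e) * (Gf e - Gp e))).
      assert (EQ : sel m tl v (fun e => sgn (f e - fpi n m pi e) * Hf m tl hd G f pi e) =
                   (lam - lp) * A + lp * B - sel m tl v x).
      { unfold A, B, sel. rewrite <- !sumN_scal, <- sumN_plus, <- sumN_minus.
        apply sumN_ext; intros e He. destruct (Nat.eqb (tl e) v) eqn:E; [|lra].
        apply Nat.eqb_eq in E. rewrite HH by auto. unfold x.
        rewrite <- (sgn_abs (f e - fpi n m pi e)).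
        generalize (sgn (f e - fpi n m pi e)); intros s. rewrite (HC e He E). ring. }
      rewrite EQ.
      assert (HA : Rabs A <= 1).
      { change (sel m tl v Gf = 1) in Gf1.
        assert (U : A <= sel m tl v Gf).
        { unfold A, sel. apply sumN_le; intros e He; destruct (Nat.eqb (tl e) v) eqn:E; try lra.
          apply Nat.eqb_eq in E; pose proof (Gf0 e He E); pose proof (sgn_bound (f e - fpi n m pi e)); unfold Gf in *; nra. }
        assert (L : -1 * sel m tl v Gf <= A).
        { unfold A, sel. rewrite <- sumN_scal. apply sumN_le; intros e He; destruct (Nat.eqb (tl e) v) eqn:E; try lra.
          apply Nat.eqb_eq in E; pose proof (Gf0 e He E); pose proof (sgn_bound (f e - fpi n m pi e)); unfold Gf in *; nra. }
        apply Rabs_le; lra. }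
      assert (HB : B <= 0) by (apply (coop n m tl hd mu G HG); auto).
      assert (Hlp : 0 <= lp).
      { unfold lp, sel. apply sumN_nonneg; intros e He. destruct (Nat.eqb (tl e) v) eqn:E; [|lra]. apply Nat.eqb_eq in E. apply (HpF v e He E). }
      assert (HL : Rabs (lam - lp) <= sel m hd v x).
      { unfold lam, lp. rewrite (conserv n m tl hd mu pi v Hnet Hpi Hv).
        destruct (Nat.eqb v 0) eqn:E.
        - apply Nat.eqb_eq in E; subst. rewrite (sel_hd0 n m tl hd (fpi n m pi) Hnet), (sel_hd0 n m tl hd x Hnet).
          replace (1 - (0 + 1)) with 0 by ring. rewrite Rabs_R0; lra.
        - rewrite Rplus_0_r. apply Rabs_le.
          assert (D1 : sel m hd v f - sel m hd v (fpi n m pi) = sel m hd v (fun e => f e - fpi n m pi e)).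
          { unfold sel. rewrite <- sumN_minus. apply sumN_ext; intros e He; destruct (Nat.eqb (hd e) v); lra. }
          rewrite D1. split.
          + unfold sel, x. rewrite sumN_opp. apply sumN_le; intros e He.
            destruct (Nat.eqb (hd e) v); [|lra]. idtac.
            pose proof (Rle_abs (- (f e - fpi n m pi e))) as Hq. rewrite Rabs_Ropp in Hq. lra.
          + unfold sel, x. apply sumN_le; intros e He. destruct (Nat.eqb (hd e) v); [apply Rle_abs|lra]. }
      assert ((lam - lp) * A <= Rabs (lam - lp)).
      { eapply Rle_trans; [apply Rle_abs|]. rewrite Rabs_mult.
        pose proof (Rabs_pos (lam - lp)). nra. }
      nra. }
    assert (V2 : Vf n m tl alpha f pi = sumN n (fun v => alpha ^ v * sel m tl v x)) by reflexivity.
    assert (X0 : forall e, 0 <= x e) by (intros; apply Rabs_pos).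
    assert (IN : sumN n (fun v => alpha ^ v * sel m hd v x) <= alpha * sumN n (fun v => alpha ^ v * sel m tl v x)).
    { unfold sel. rewrite !regroup. rewrite <- sumN_scal. apply sumN_le; intros e He.
      rewrite (Htln e He). pose proof (X0 e). pose proof (pow_le alpha (tl e) ltac:(lra)).
      destruct (Nat.ltb (hd e) n) eqn:E; [|apply Rmult_le_pos; [lra|apply Rmult_le_pos; auto]].
      destruct (Hn1 e He) as [H1 _].
      replace (hd e) with (S (tl e) + (hd e - S (tl e)))%nat by lia.
      rewrite pow_add. simpl pow.
      assert (Hk : alpha ^ (hd e - S (tl e)) <= 1).
      { rewrite <- (pow1 (hd e - S (tl e))). apply pow_incr; lra. }
      assert (0 <= alpha ^ (hd e - S (tl e))) by (apply pow_le; lra).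
      assert (0 <= alpha * alpha ^ tl e) by nra.
      replace (alpha * alpha ^ tl e * alpha ^ (hd e - S (tl e)) * x e) with ((alpha * alpha ^ tl e * x e) * alpha ^ (hd e - S (tl e))) by ring.
      replace (alpha * (alpha ^ tl e * x e)) with ((alpha * alpha ^ tl e * x e) * 1) by ring.
      apply Rmult_le_compat_l; auto. apply Rmult_le_pos; auto. }
    apply Rle_trans with (sumN n (fun v => alpha ^ v * sel m hd v x) - sumN n (fun v => alpha ^ v * sel m tl v x)).
    + rewrite <- sumN_minus. apply sumN_le; intros v Hv.
      rewrite <- Rmult_minus_distr_l. apply Rmult_le_compat_l; [apply pow_le; lra|exact (Node v Hv)].
    + rewrite V2. lra.
Qed.
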